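(* Let $\mathcal K$ be a category with equalizers and coequalizers, $\mathbb T=(T,m,u)$ a monad on $\mathcal K$ such that $T$ preserves coequalizers, $\mathbb G=(G,\Delta,\varepsilon)$ a comonad on $\mathcal K_{\mathbb T}$, and $g:U_{\mathbb T}\to U_{\mathbb T}G$ a right $\mathbb G$-coaction. Let $\mathbb B$ be the coinvariant monad with its inclusion monad morphism $\beta:\mathbb B\to\mathbb T$, and $(N_B,R_B)$ the adjunction associated to $\beta$ (with $R_B:\mathcal K_{\mathbb T}\to\mathcal K_{\mathbb B}$ the restriction along $\beta$ and $N_B$ its left adjoint). Then $N_B$ admits the structure of a left $\mathbb G$-comodule functor, with coaction $\bar h:N_B\to GN_B$ uniquely determined by $\bar h\circ\chi^B=(G\chi^B)\circ(\bar gU_{\mathbb B})$, where $\chi^B:F_{\mathbb T}U_{\mathbb B}\to N_B$ is the canonical coequalizer defining $N_B$ and $\bar g=(\lambda^TGF_{\mathbb T})\circ(F_{\mathbb T}gF_{\mathbb T})\circ(F_{\mathbb T}u)$.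
   Context: $\mathcal K_{\mathbb T}$ is the category of $\mathbb T$-modules, $U_{\mathbb T}$ the forgetful and $F_{\mathbb T}$ the free functor, $\lambda^T:F_{\mathbb T}U_{\mathbb T}\to\mathcal K_{\mathbb T}$ the counit (given by the actions). A right $\mathbb G$-coaction on $U_{\mathbb T}$ is $g:U_{\mathbb T}\to U_{\mathbb T}G$ with $(U_{\mathbb T}\varepsilon)\circ g=U_{\mathbb T}$, $(U_{\mathbb T}\Delta)\circ g=(gG)\circ g$. The coinvariant monad $\mathbb B=\mathbb T^{Co(G,g)}$ is the monad on the equalizer $(B,\beta)$ of $gF_{\mathbb T}$ and $U_{\mathbb T}\bar g$ (both $T\to U_{\mathbb T}GF_{\mathbb T}$), with the unique monad structure making $\beta:B\to T$ a monad morphism. For $(Y,y)\in\mathcal K_{\mathbb B}$, $N_B(Y,y)$ is the coequalizer $\chi^B$ in $\mathcal K_{\mathbb T}$ of the two maps $F_{\mathbb T}BY\to F_{\mathbb T}Y$ given by $\lambda^T F_{\mathbb T}Y\circ F_{\mathbb T}\beta Y$ and $F_{\mathbb T}y$. A left $\mathbb G$-comodule functor is $(L,l)$ with $l:L\to GL$, $(\varepsilon L)\circ l=L$, $(\Delta L)\circ l=(Gl)\circ l$. *)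

(* Defs.v *)
From Stdlib Require Import ProofIrrelevance.

Set Implicit Arguments.
Unset Strict Implicit.

Record Category := {
  Ob :> Type;
  Hom : Ob -> Ob -> Type;
  idm : forall a, Hom a a;
  comp : forall a b c, Hom b c -> Hom a b -> Hom a c;
  comp_id_l : forall a b (f : Hom a b), comp (idm b) f = f;
  comp_id_r : forall a b (f : Hom a b), comp f (idm a) = f;
  comp_assoc : forall a b c d (h : Hom c d) (g : Hom b c) (f : Hom a b),
      comp h (comp g f) = comp (comp h g) f }.

Arguments Hom {C} : rename.
Arguments idm {C} a : rename.
Arguments comp {C a b c} : rename.
Notation "g ∘ f" := (comp g f) (at level 40, left associativity).

Record Functor (C D : Category) := {
  fobj :> C -> D;
  fmap : forall a b, Hom a b -> Hom (fobj a) (fobj b);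
  fmap_id : forall a, fmap (idm a) = idm (fobj a);
  fmap_comp : forall a b c (g : Hom b c) (f : Hom a b),
      fmap (g ∘ f) = fmap g ∘ fmap f }.
Arguments fmap {C D} F {a b} : rename.

Record Monad (C : Category) := {
  mT :> Functor C C;
  unit : forall X : C, Hom X (mT X);
  mult : forall X : C, Hom (mT (mT X)) (mT X);
  unit_nat : forall X Y (f : Hom X Y), fmap mT f ∘ unit X = unit Y ∘ f;
  mult_nat : forall X Y (f : Hom X Y),
      fmap mT f ∘ mult X = mult Y ∘ fmap mT (fmap mT f);
  mult_assoc : forall X, mult X ∘ fmap mT (mult X) = mult X ∘ mult (mT X);
  mult_unit_l : forall X, mult X ∘ unit (mT X) = idm (mT X);
  mult_unit_r : forall X, mult X ∘ fmap mT (unit X) = idm (mT X) }.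
Arguments unit {C} T X : rename.
Arguments mult {C} T X : rename.

Record Comonad (C : Category) := {
  cG :> Functor C C;
  counit : forall X : C, Hom (cG X) X;
  comult : forall X : C, Hom (cG X) (cG (cG X));
  counit_nat : forall X Y (f : Hom X Y), f ∘ counit X = counit Y ∘ fmap cG f;
  comult_nat : forall X Y (f : Hom X Y),
      fmap cG (fmap cG f) ∘ comult X = comult Y ∘ fmap cG f;
  comult_coassoc : forall X,
      fmap cG (comult X) ∘ comult X = comult (cG X) ∘ comult X;
  counit_comult_l : forall X, counit (cG X) ∘ comult X = idm (cG X);
  counit_comult_r : forall X, fmap cG (counit X) ∘ comult X = idm (cG X) }.
Arguments counit {C} G X : rename.
Arguments comult {C} G X : rename.

Section EM.
Variables (C : Category) (T : Monad C).

Record Algebra := {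
  carrier : C;
  act : Hom (T carrier) carrier;
  act_unit : act ∘ unit T carrier = idm carrier;
  act_mult : act ∘ fmap T act = act ∘ mult T carrier }.

Record AlgHom (A B : Algebra) := {
  ahom :> Hom (carrier A) (carrier B);
  ahom_comm : ahom ∘ act A = act B ∘ fmap T ahom }.

Lemma AlgHom_eq (A B : Algebra) (f g : AlgHom A B) :
  ahom f = ahom g -> f = g.
Proof.
  destruct f as [f pf], g as [g pg]; simpl; intros ->.
  f_equal; apply proof_irrelevance.
Qed.

Program Definition alg_id (A : Algebra) : AlgHom A A :=
  {| ahom := idm (carrier A) |}.
Next Obligation. intros A; simpl; rewrite fmap_id, comp_id_l, comp_id_r; reflexivity. Qed.

Program Definition alg_comp (A B D : Algebra) (g : AlgHom B D) (f : AlgHom A B)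
  : AlgHom A D := {| ahom := ahom g ∘ ahom f |}.
Next Obligation.
  intros A B D g f; simpl.
  rewrite fmap_comp, <- comp_assoc, (ahom_comm f), comp_assoc, (ahom_comm g).
  now rewrite comp_assoc.
Qed.

Program Definition EMcat : Category :=
  {| Ob := Algebra; Hom := AlgHom; idm := alg_id; comp := alg_comp |}.
Next Obligation. intros; apply AlgHom_eq; simpl; apply comp_id_l. Qed.
Next Obligation. intros; apply AlgHom_eq; simpl; apply comp_id_r. Qed.
Next Obligation. intros; apply AlgHom_eq; simpl; apply comp_assoc. Qed.

Program Definition Forget : Functor EMcat C :=
  {| fobj := carrier; fmap := fun A B f => ahom f |}.
Next Obligation. reflexivity. Qed.
Next Obligation. reflexivity. Qed.

Program Definition free_alg (X : C) : Algebra :=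
  {| carrier := T X; act := mult T X |}.
Next Obligation. intros; apply mult_unit_l. Qed.
Next Obligation. intros; apply mult_assoc. Qed.

Program Definition free_hom (X Y : C) (f : Hom X Y)
  : AlgHom (free_alg X) (free_alg Y) := {| ahom := fmap T f |}.
Next Obligation. intros; apply mult_nat. Qed.

Program Definition Free : Functor C EMcat :=
  {| fobj := free_alg; fmap := free_hom |}.
Next Obligation. intros; apply AlgHom_eq; simpl; apply fmap_id. Qed.
Next Obligation. intros; apply AlgHom_eq; simpl; apply fmap_comp. Qed.

Program Definition lambdaT (A : Algebra) : AlgHom (free_alg (carrier A)) A :=
  {| ahom := act A |}.
Next Obligation. intros; symmetry; apply act_mult. Qed.

End EM.

Arguments Forget {C} T.
Arguments Free {C} T.
Arguments lambdaT {C T} A.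

Definition IsEqualizer (C : Category) (E A B : C) (e : Hom E A) (f1 f2 : Hom A B)
  : Prop :=
  f1 ∘ e = f2 ∘ e /\
  forall (Z : C) (h : Hom Z A), f1 ∘ h = f2 ∘ h ->
    exists! k : Hom Z E, e ∘ k = h.

Definition IsCoequalizer (C : Category) (A B Q : C) (f1 f2 : Hom A B) (q : Hom B Q)
  : Prop :=
  q ∘ f1 = q ∘ f2 /\
  forall (Z : C) (h : Hom B Z), h ∘ f1 = h ∘ f2 ->
    exists! k : Hom Q Z, k ∘ q = h.

Definition HasEqualizers (C : Category) : Prop :=
  forall (A B : C) (f1 f2 : Hom A B),
    exists (E : C) (e : Hom E A), IsEqualizer e f1 f2.

Definition HasCoequalizers (C : Category) : Prop :=
  forall (A B : C) (f1 f2 : Hom A B),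
    exists (Q : C) (q : Hom B Q), IsCoequalizer f1 f2 q.

Definition PreservesCoequalizers (C D : Category) (F : Functor C D) : Prop :=
  forall (A B Q : C) (f1 f2 : Hom A B) (q : Hom B Q),
    IsCoequalizer f1 f2 q -> IsCoequalizer (fmap F f1) (fmap F f2) (fmap F q).

Definition IsRightCoaction (C : Category) (T : Monad C) (G : Comonad (EMcat T))
  (g : forall A : EMcat T, Hom (Forget T A) (Forget T (G A))) : Prop :=
  (forall (A B : EMcat T) (f : Hom A B),
      fmap (Forget T) (fmap G f) ∘ g A = g B ∘ fmap (Forget T) f) /\
  (forall A, fmap (Forget T) (counit G A) ∘ g A = idm (Forget T A)) /\
  (forall A, fmap (Forget T) (comult G A) ∘ g A = g (G A) ∘ g A).

Definition gbar (C : Category) (T : Monad C) (G : Comonad (EMcat T))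
  (g : forall A : EMcat T, Hom (Forget T A) (Forget T (G A))) (X : C)
  : Hom (Free T X) (G (Free T X)) :=
  @comp (EMcat T) _ _ _
    (@comp (EMcat T) _ _ _ (lambdaT (G (Free T X))) (fmap (Free T) (g (Free T X))))
    (fmap (Free T) (unit T X)).

Definition IsMonadMorphism (C : Category) (B T : Monad C)
  (beta : forall X : C, Hom (B X) (T X)) : Prop :=
  (forall X Y (f : Hom X Y), fmap T f ∘ beta X = beta Y ∘ fmap B f) /\
  (forall X, beta X ∘ unit B X = unit T X) /\
  (forall X, beta X ∘ mult B X = mult T X ∘ fmap T (beta X) ∘ beta (B X)).

Definition IsCoinvariantMonad (C : Category) (T : Monad C) (G : Comonad (EMcat T))
  (g : forall A : EMcat T, Hom (Forget T A) (Forget T (G A)))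
  (B : Monad C) (beta : forall X : C, Hom (B X) (T X)) : Prop :=
  IsMonadMorphism beta /\
  forall X : C,
    IsEqualizer (beta X) (g (Free T X)) (fmap (Forget T) (gbar g X)).

Definition IsLeftComoduleFunctor (D E : Category) (G : Comonad E) (L : Functor D E)
  (l : forall Y : D, Hom (L Y) (G (L Y))) : Prop :=
  (forall (Y Y' : D) (f : Hom Y Y'), fmap G (fmap L f) ∘ l Y = l Y' ∘ fmap L f) /\
  (forall Y, counit G (L Y) ∘ l Y = idm (L Y)) /\
  (forall Y, comult G (L Y) ∘ l Y = fmap G (l Y) ∘ l Y).

Definition NB_pair1 (C : Category) (T B : Monad C)
  (beta : forall X : C, Hom (B X) (T X)) (Y : EMcat B)
  : Hom (Free T (B (carrier Y))) (Free T (carrier Y)) :=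
  @comp (EMcat T) _ _ _ (lambdaT (Free T (carrier Y))) (fmap (Free T) (beta (carrier Y))).

Definition NB_pair2 (C : Category) (T B : Monad C) (Y : EMcat B)
  : Hom (Free T (B (carrier Y))) (Free T (carrier Y)) :=
  fmap (Free T) (act Y).

Definition IsNB (C : Category) (T B : Monad C) (beta : forall X : C, Hom (B X) (T X))
  (N : Functor (EMcat B) (EMcat T))
  (chi : forall Y : EMcat B, Hom (Free T (Forget B Y)) (N Y)) : Prop :=
  (forall (Y Y' : EMcat B) (f : Hom Y Y'),
      fmap N f ∘ chi Y = chi Y' ∘ fmap (Free T) (fmap (Forget B) f)) /\
  (forall Y : EMcat B, IsCoequalizer (NB_pair1 beta Y) (NB_pair2 T Y) (chi Y)).

(* Main.v *)
Require Import Defs.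
From Stdlib Require Import ClassicalEpsilon ssreflect.

Lemma coeq_epi (C : Category) (A B Q : C) (f1 f2 : Hom A B) (q : Hom B Q) (Z : C)
  (a b : Hom Q Z) : IsCoequalizer f1 f2 q -> a ∘ q = b ∘ q -> a = b.
Proof.
  intros [Hq Hu] Hab.
  assert (H : (a ∘ q) ∘ f1 = (a ∘ q) ∘ f2) by now rewrite -!comp_assoc Hq.
  destruct (Hu Z _ H) as [k [Hk Hun]].
  transitivity k; [symmetry|]; apply Hun; auto.
Qed.

Lemma free_form (K : Category) (T : Monad K) (X : K) (A : EMcat T)
  (a : Hom (Free T X) A) :
  ahom a = act A ∘ fmap T (ahom a ∘ unit T X).
Proof.
  rewrite fmap_comp comp_assoc -(ahom_comm a).
  simpl. rewrite -comp_assoc mult_unit_r comp_id_r. reflexivity.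
Qed.

Lemma free_ext (K : Category) (T : Monad K) (X : K) (A : EMcat T)
  (a b : Hom (Free T X) A) :
  ahom a ∘ unit T X = ahom b ∘ unit T X -> a = b.
Proof.
  intros H. apply AlgHom_eq. rewrite (@free_form K T X A a) (@free_form K T X A b) H. reflexivity.
Qed.

Lemma ahom_comp (K : Category) (T : Monad K) (A B D : EMcat T) (f : Hom B D) (h : Hom A B) :
  ahom (f ∘ h) = ahom f ∘ ahom h.
Proof. reflexivity. Qed.
Lemma ahom_free (K : Category) (T : Monad K) (X Y : K) (h : Hom X Y) :
  ahom (fmap (Free T) h) = fmap T h.
Proof. reflexivity. Qed.
Lemma ahom_id (K : Category) (T : Monad K) (A : EMcat T) :
  ahom (idm A) = idm (carrier A).
Proof. reflexivity. Qed.

Section S.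
Variables (K : Category) (T : Monad K) (G : Comonad (EMcat T))
  (g : forall A : EMcat T, Hom (Forget T A) (Forget T (G A))).
Hypothesis Hg : IsRightCoaction g.

Lemma gbar_u X : ahom (gbar g X) ∘ unit T X = g (Free T X) ∘ unit T X.
Proof.
  unfold gbar; simpl.
  rewrite -!comp_assoc (unit_nat T).
  rewrite (comp_assoc (fmap T _)) (unit_nat T).
  rewrite !comp_assoc act_unit comp_id_l. reflexivity.
Qed.

Lemma gnat (A A' : EMcat T) (f : Hom A A') :
  ahom (fmap G f) ∘ g A = g A' ∘ ahom f.
Proof. destruct Hg as [H _]. exact (H A A' f). Qed.

Opaque gbar.
Ltac norm := cbn [ahom comp EMcat alg_comp fobj fmap Free Forget free_alg free_hom carrier lambdaT alg_id idm] in *.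

Lemma gbar_nat X X' (h : Hom X X') :
  fmap G (fmap (Free T) h) ∘ gbar g X = gbar g X' ∘ fmap (Free T) h.
Proof.
  apply free_ext. pose proof (gbar_u X) as E1. pose proof (gbar_u X') as E2.
  pose proof (@gnat _ _ (fmap (Free T) h)) as E3. norm.
  revert E1 E2. generalize (gbar g X) (gbar g X'). intros a a' E1 E2.
  rewrite -!comp_assoc E1 (unit_nat T) [in RHS]comp_assoc E2 [in LHS]comp_assoc E3 -!comp_assoc (unit_nat T). reflexivity.
Qed.

Lemma gbar_counit X : counit G (Free T X) ∘ gbar g X = idm (Free T X).
Proof.
  apply free_ext. pose proof (gbar_u X) as E1. destruct Hg as [_ [H _]].
  specialize (H (Free T X)). norm.
  revert E1. generalize (gbar g X). intros a E1.
  rewrite -comp_assoc E1 comp_assoc H !comp_id_l. reflexivity.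
Qed.

Lemma gbar_coassoc X :
  comult G (Free T X) ∘ gbar g X = fmap G (gbar g X) ∘ gbar g X.
Proof.
  apply free_ext. pose proof (gbar_u X) as E1. destruct Hg as [_ [_ H]].
  specialize (H (Free T X)). pose proof (@gnat _ _ (gbar g X)) as E3. norm.
  revert E1 E3. generalize (gbar g X). intros a E1 E3.
  rewrite -!comp_assoc E1 !comp_assoc E3 H -!comp_assoc E1. reflexivity.
Qed.
End S.
Ltac norm := cbn [ahom comp EMcat alg_comp fobj fmap Free Forget free_alg free_hom carrier lambdaT alg_id idm] in *.

Theorem mainTheorem11 (K : Category) (T : Monad K) (G : Comonad (EMcat T))
  (g : forall A : EMcat T, Hom (Forget T A) (Forget T (G A)))
  (B : Monad K) (beta : forall X : K, Hom (B X) (T X))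
  (N : Functor (EMcat B) (EMcat T))
  (chi : forall Y : EMcat B, Hom (Free T (Forget B Y)) (N Y)) :
  HasEqualizers K ->
  HasCoequalizers K ->
  PreservesCoequalizers T ->
  IsRightCoaction g ->
  IsCoinvariantMonad (B := B) g beta ->
  IsNB (N := N) beta chi ->
  exists hbar : forall Y : EMcat B, Hom (N Y) (G (N Y)),
    IsLeftComoduleFunctor (G := G) (L := N) hbar /\
    (forall Y, hbar Y ∘ chi Y = fmap G (chi Y) ∘ gbar g (Forget B Y)) /\
    (forall hbar' : forall Y : EMcat B, Hom (N Y) (G (N Y)),
        (forall Y, hbar' Y ∘ chi Y = fmap G (chi Y) ∘ gbar g (Forget B Y)) ->
        forall Y, hbar' Y = hbar Y).
Proof.
  intros _ _ _ Hg [Hmm Heq] [Hnat Hcoeq].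
  assert (compat : forall Y : EMcat B,
    (fmap G (chi Y) ∘ gbar g (Forget B Y)) ∘ NB_pair1 beta Y =
    (fmap G (chi Y) ∘ gbar g (Forget B Y)) ∘ NB_pair2 T Y).
  { intros Y. apply free_ext. pose proof (@gbar_u K T G g (carrier Y)) as E1.
    destruct (Heq (carrier Y)) as [E2 _].
    pose proof (@gnat K T G g Hg _ _ (chi Y)) as E3.
    destruct (Hcoeq Y) as [E4 _].
    apply (f_equal (fun k : Hom (Free T (B (carrier Y))) (N Y) => ahom k ∘ unit T (B (carrier Y)))) in E4.
    unfold NB_pair1, NB_pair2 in *. norm. cbn [act free_alg] in *.
    revert E1 E2 E3 E4. generalize (gbar g (carrier Y)) (chi Y). intros gb c E1 E2 E3 E4.
    rewrite -!comp_assoc (unit_nat T) in E4.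
    rewrite (comp_assoc (mult T _)) mult_unit_l comp_id_l (unit_nat T) in E4.
    rewrite -!comp_assoc !(unit_nat T).
    rewrite (comp_assoc (mult T _)) mult_unit_l comp_id_l -E2.
    rewrite (comp_assoc (ahom gb)) E1 !comp_assoc E3 -!comp_assoc E4. reflexivity. }
  assert (Hfac : forall Y : EMcat B, exists k : Hom (N Y) (G (N Y)),
      k ∘ chi Y = fmap G (chi Y) ∘ gbar g (Forget B Y)).
  { intros Y. destruct (Hcoeq Y) as [_ Hu].
    destruct (Hu _ _ (compat Y)) as [k [Hk _]]. exists k; exact Hk. }
  pose (hbar := fun Y => proj1_sig (constructive_indefinite_description _ (Hfac Y))).
  assert (Hh : forall Y, hbar Y ∘ chi Y = fmap G (chi Y) ∘ gbar g (Forget B Y)).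
  { intros Y. exact (proj2_sig (constructive_indefinite_description _ (Hfac Y))). }
  clearbody hbar.
  pose proof (@gbar_nat K T G g Hg) as Gn.
  pose proof (@gbar_counit K T G g Hg) as Gc.
  pose proof (@gbar_coassoc K T G g Hg) as Ga.
  clear compat Hfac Heq.
  revert Hh Gn Gc Ga. generalize (@gbar K T G g). intros gb Hh Gn Gc Ga.
  exists hbar. split; [split; [|split]|split].
  - intros Y Y' f. eapply coeq_epi; [exact (Hcoeq Y)|].
    rewrite -!comp_assoc Hh Hnat !comp_assoc Hh -fmap_comp Hnat fmap_comp -!comp_assoc Gn. reflexivity.
  - intros Y. eapply coeq_epi; [exact (Hcoeq Y)|].
    rewrite -comp_assoc Hh comp_assoc -counit_nat -comp_assoc Gc comp_id_l comp_id_r.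
    reflexivity.
  - intros Y. eapply coeq_epi; [exact (Hcoeq Y)|].
    rewrite -!comp_assoc Hh comp_assoc -comult_nat -comp_assoc Ga comp_assoc.
    rewrite (comp_assoc (fmap G (hbar Y))) -(fmap_comp G (hbar Y)) Hh fmap_comp. reflexivity.
  - exact Hh.
  - intros hbar' Hh' Y. eapply coeq_epi; [exact (Hcoeq Y)|]. rewrite Hh Hh'. reflexivity.
Qed.
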